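(* Let $M,N$ be $\mathtt{dBang}$ terms with $M\to_S N$ (one surface step). Then for every resource term $n\sqsubset N$ there is a resource term $m\sqsubset M$ such that $m$ reduces to $n$ in one surface resource step.
   Context: \textbf{dBang.} Terms: $M,N ::= x \mid \lambda x.M \mid MN \mid M[N/x] \mid\ !M \mid \mathrm{der}\,M$ ($M[N/x]$ explicit substitution binding $x$); $M\{N/x\}$ capture-avoiding substitution. List contexts $L ::= \square\mid L[N/x]$. Root rules: $L\langle\lambda x.M\rangle N \mapsto L\langle M[N/x]\rangle$; $M[L\langle !N\rangle/x]\mapsto L\langle M\{N/x\}\rangle$; $\mathrm{der}(L\langle !N\rangle)\mapsto L\langle N\rangle$. Surface contexts: $S ::= \square\mid\lambda x.S\mid SM\mid MS\mid S[M/x]\mid M[S/x]\mid\mathrm{der}\,S$; $\to_S$ is the closure of the root rules under surface contexts. \textbf{Resources.} Resource terms: $m,n ::= x\mid\lambda x.m\mid mn\mid m[n/x]\mid\mathrm{der}\,m\mid[m_1,\dots,m_k]$ ($k\ge0$ multisets). Resource list contexts $l::=\square\mid l[n/x]$. Root resource rules: $\mathrm{der}(l\langle[m]\rangle)\to l\langle m\rangle$; $\mathrm{der}(l\langle[m_1,\dots,m_k]\rangle)\to\emptyset$ if $k\ne1$; $l\langle\lambda x.m\rangle n\to l\langle m[n/x]\rangle$; $m[l\langle[n_1,\dots,n_k]\rangle/x]\to l\langle m\{n_{\sigma(1)}/x_1,\dots,n_{\sigma(k)}/x_k\}\rangle$ for every permutation $\sigma$ when $x_1,\dots,x_k$ are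 exactly the free occurrences of $x$ in $m$, and $\to\emptyset$ otherwise. Surface resource reduction is the closure under resource surface contexts $s::=\square\mid\lambda x.s\mid s n\mid m s\mid s[n/x]\mid m[s/x]\mid\mathrm{der}\,s$ (not inside bags). \textbf{Approximation.} $x\sqsubset x$; $\lambda x.m\sqsubset\lambda x.M$ if $m\sqsubset M$; $mn\sqsubset MN$ and $m[n/x]\sqsubset M[N/x]$ if $m\sqsubset M,n\sqsubset N$; $\mathrm{der}\,m\sqsubset\mathrm{der}\,M$ if $m\sqsubset M$; $[m_1,\dots,m_k]\sqsubset\ !M$ for any $k\ge0$ if every $m_i\sqsubset M$. *)

(* Defs.v *)
From Stdlib Require Import List Arith Permutation.
Import ListNotations.

(* ES M N  stands for  M[N/x] : the variable x (index 0) is bound in M only. *)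
Inductive term : Type :=
| Var : nat -> term
| Lam : term -> term
| App : term -> term -> term
| ES  : term -> term -> term
| Bang : term -> term
| Der : term -> term.

Fixpoint lift (c d : nat) (M : term) : term :=
  match M with
  | Var i => if i <? c then Var i else Var (i + d)
  | Lam M => Lam (lift (S c) d M)
  | App M N => App (lift c d M) (lift c d N)
  | ES M N => ES (lift (S c) d M) (lift c d N)
  | Bang M => Bang (lift c d M)
  | Der M => Der (lift c d M)
  end.

Fixpoint subst (k : nat) (N : term) (M : term) : term :=
  match M with
  | Var i => if i <? k then Var i else if i =? k then lift 0 k N else Var (i - 1)
  | Lam M => Lam (subst (S k) N M)
  | App M P => App (subst k N M) (subst k N P)
  | ES M P => ES (subst (S k) N M) (subst k N P)
  | Bang M => Bang (subst k N M)
  | Der M => Der (subst k N M)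
  end.

(* List contexts L ::= [] | L[N/x]; the list head is the outermost substitution:
   plug (N :: L) M = (plug L M)[N/x]. *)
Fixpoint plug (L : list term) (M : term) : term :=
  match L with
  | [] => M
  | N :: L' => ES (plug L' M) N
  end.

Inductive root : term -> term -> Prop :=
| root_dB : forall L M N,
    root (App (plug L (Lam M)) N) (plug L (ES M (lift 0 (length L) N)))
| root_sBang : forall L M N,
    root (ES M (plug L (Bang N))) (plug L (subst 0 N (lift 1 (length L) M)))
| root_dBang : forall L N,
    root (Der (plug L (Bang N))) (plug L N).

Inductive sstep : term -> term -> Prop :=
| s_root : forall M N, root M N -> sstep M N
| s_lam : forall M N, sstep M N -> sstep (Lam M) (Lam N)
| s_appl : forall M M' N, sstep M M' -> sstep (App M N) (App M' N)
| s_appr : forall M N N', sstep N N' -> sstep (App M N) (App M N')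
| s_esl : forall M M' N, sstep M M' -> sstep (ES M N) (ES M' N)
| s_esr : forall M N N', sstep N N' -> sstep (ES M N) (ES M N')
| s_der : forall M M', sstep M M' -> sstep (Der M) (Der M').

(* RBag ms is the multiset [m1,...,mk], represented by a list (order irrelevant up to
   the permutation quantification in the substitution rule). *)
Inductive rterm : Type :=
| RVar : nat -> rterm
| RLam : rterm -> rterm
| RApp : rterm -> rterm -> rterm
| RES  : rterm -> rterm -> rterm
| RDer : rterm -> rterm
| RBag : list rterm -> rterm.

Fixpoint rlift (c d : nat) (m : rterm) : rterm :=
  match m with
  | RVar i => if i <? c then RVar i else RVar (i + d)
  | RLam m => RLam (rlift (S c) d m)
  | RApp m n => RApp (rlift c d m) (rlift c d n)
  | RES m n => RES (rlift (S c) d m) (rlift c d n)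
  | RDer m => RDer (rlift c d m)
  | RBag ms => RBag (map (rlift c d) ms)
  end.

Fixpoint rplug (l : list rterm) (m : rterm) : rterm :=
  match l with
  | [] => m
  | n :: l' => RES (rplug l' m) n
  end.

(* Linear substitution: lsub k ns m r  means r = m{n_1/x_1,...,n_j/x_j} where
   x_1,...,x_j are exactly the free occurrences of index k in m, in left-to-right
   order, and ns = [n_1;...;n_j] (so j must equal the number of occurrences). *)
Inductive lsub : nat -> list rterm -> rterm -> rterm -> Prop :=
| lsub_var_eq : forall k n, lsub k [n] (RVar k) (rlift 0 k n)
| lsub_var_lt : forall k i, i < k -> lsub k [] (RVar i) (RVar i)
| lsub_var_gt : forall k i, k < i -> lsub k [] (RVar i) (RVar (i - 1))
| lsub_lam : forall k ns m r, lsub (S k) ns m r -> lsub k ns (RLam m) (RLam r)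
| lsub_app : forall k ns1 ns2 m1 m2 r1 r2,
    lsub k ns1 m1 r1 -> lsub k ns2 m2 r2 ->
    lsub k (ns1 ++ ns2) (RApp m1 m2) (RApp r1 r2)
| lsub_es : forall k ns1 ns2 m1 m2 r1 r2,
    lsub (S k) ns1 m1 r1 -> lsub k ns2 m2 r2 ->
    lsub k (ns1 ++ ns2) (RES m1 m2) (RES r1 r2)
| lsub_der : forall k ns m r, lsub k ns m r -> lsub k ns (RDer m) (RDer r)
| lsub_bag : forall k ns ms rs, lsub_list k ns ms rs -> lsub k ns (RBag ms) (RBag rs)
with lsub_list : nat -> list rterm -> list rterm -> list rterm -> Prop :=
| lsub_nil : forall k, lsub_list k [] [] []
| lsub_cons : forall k ns1 ns2 m ms r rs,
    lsub k ns1 m r -> lsub_list k ns2 ms rs ->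
    lsub_list k (ns1 ++ ns2) (m :: ms) (r :: rs).

(* Root resource rules, as a relation  rroot m r  meaning "r is a summand of the
   (finite sum of resource terms) that m reduces to".  Rules whose result is the
   empty sum (der of a bag of size <> 1; substitution with a mismatched number of
   occurrences) contribute no summand and hence no clause. *)
Inductive rroot : rterm -> rterm -> Prop :=
| rroot_der : forall l m, rroot (RDer (rplug l (RBag [m]))) (rplug l m)
| rroot_beta : forall l m n,
    rroot (RApp (rplug l (RLam m)) n) (rplug l (RES m (rlift 0 (length l) n)))
| rroot_subst : forall l m ns ns' r,
    Permutation ns ns' ->
    lsub 0 ns' (rlift 1 (length l) m) r ->
    rroot (RES m (rplug l (RBag ns))) (rplug l r).

Inductive rsstep : rterm -> rterm -> Prop :=
| rs_root : forall m r, rroot m r -> rsstep m r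
| rs_lam : forall m m', rsstep m m' -> rsstep (RLam m) (RLam m')
| rs_appl : forall m m' n, rsstep m m' -> rsstep (RApp m n) (RApp m' n)
| rs_appr : forall m n n', rsstep n n' -> rsstep (RApp m n) (RApp m n')
| rs_esl : forall m m' n, rsstep m m' -> rsstep (RES m n) (RES m' n)
| rs_esr : forall m n n', rsstep n n' -> rsstep (RES m n) (RES m n')
| rs_der : forall m m', rsstep m m' -> rsstep (RDer m) (RDer m').

Inductive approx : rterm -> term -> Prop :=
| ap_var : forall i, approx (RVar i) (Var i)
| ap_lam : forall m M, approx m M -> approx (RLam m) (Lam M)
| ap_app : forall m n M N, approx m M -> approx n N -> approx (RApp m n) (App M N)
| ap_es : forall m n M N, approx m M -> approx n N -> approx (RES m n) (ES M N)
| ap_der : forall m M, approx m M -> approx (RDer m) (Der M)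
| ap_bag : forall ms M, (forall m, In m ms -> approx m M) -> approx (RBag ms) (Bang M).

(* Main.v *)
Require Import Defs.
From Stdlib Require Import List Arith Permutation Lia.
Import ListNotations.

Lemma unlift_bag : forall (P : rterm -> Prop) rs,
  (forall r, In r rs -> P r) -> forall (Q : rterm -> rterm -> Prop),
  (forall r, In r rs -> P r -> exists n, Q n r) ->
  exists ns, Forall2 Q ns rs.
Proof.
  intros P rs HP Q H. induction rs as [|r rs IH].
  - exists []. constructor.
  - destruct (H r (or_introl eq_refl) (HP r (or_introl eq_refl))) as [n Hn].
    destruct IH as [ns Hns].
    + intros; apply HP; simpl; auto.
    + intros; apply H; simpl; auto.
    + exists (n :: ns). constructor; auto.
Qed.

Lemma approx_unlift : forall N c d r, approx r (lift c d N) ->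
  exists n, approx n N /\ rlift c d n = r.
Proof.
  induction N; intros c d r H; simpl in H; [|inversion H; subst..].
  - destruct (n <? c) eqn:E; inversion H; subst;
    exists (RVar n); (split; [constructor| simpl; rewrite E; auto]).
  - destruct (IHN _ _ _ H2) as [n [Hn Hr]]. exists (RLam n); split; [constructor; auto| simpl; congruence].
  - destruct (IHN1 _ _ _ H3) as [n1 [Hn1 Hr1]].
    destruct (IHN2 _ _ _ H4) as [n2 [Hn2 Hr2]].
    exists (RApp n1 n2); split; [constructor; auto| simpl; congruence].
  - destruct (IHN1 _ _ _ H3) as [n1 [Hn1 Hr1]].
    destruct (IHN2 _ _ _ H4) as [n2 [Hn2 Hr2]].
    exists (RES n1 n2); split; [constructor; auto| simpl; congruence].
  - destruct (unlift_bag _ ms H2 (fun n r => approx n N /\ rlift c d n = r))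
      as [ns Hns].
    + intros r0 Hin Ha. apply IHN; auto.
    + exists (RBag ns). split.
      * constructor. intros m Hm. clear -Hns Hm. induction Hns; simpl in Hm.
        -- contradiction.
        -- destruct Hm; subst; [apply H| apply IHHns]; auto.
      * simpl. f_equal. clear -Hns. induction Hns; simpl; auto.
        destruct H; congruence.
  - destruct (IHN _ _ _ H2) as [n [Hn Hr]]. exists (RDer n); split; [constructor; auto| simpl; congruence].
Qed.

Lemma approx_subst : forall P k N r, approx r (subst k N P) ->
  exists p ns, approx p P /\ (forall x, In x ns -> approx x N) /\ lsub k ns p r.
Proof.
  induction P; intros k N r H; simpl in H.
  - destruct (n <? k) eqn:E1.
    + inversion H; subst. exists (RVar n), []. split; [constructor|split; [simpl; tauto|]].
      apply lsub_var_lt. apply Nat.ltb_lt; auto.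
    + destruct (n =? k) eqn:E2.
      * apply Nat.eqb_eq in E2; subst.
        destruct (approx_unlift _ _ _ _ H) as [n0 [Hn0 Hr]]. subst.
        exists (RVar k), [n0]. split; [constructor|split].
        -- simpl; intros x [<-|[]]; auto.
        -- constructor.
      * inversion H; subst. exists (RVar n), []. split; [constructor|split; [simpl; tauto|]].
        apply lsub_var_gt. apply Nat.ltb_ge in E1. apply Nat.eqb_neq in E2. lia.
  - inversion H; subst. destruct (IHP _ _ _ H2) as [p [ns [A [B C]]]].
    exists (RLam p), ns. split; [constructor; auto| split; auto]. constructor; auto.
  - inversion H; subst. destruct (IHP1 _ _ _ H3) as [p1 [ns1 [A1 [B1 C1]]]].
    destruct (IHP2 _ _ _ H4) as [p2 [ns2 [A2 [B2 C2]]]].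
    exists (RApp p1 p2), (ns1 ++ ns2). split; [constructor; auto| split].
    + intros x Hx; apply in_app_or in Hx; destruct Hx; auto.
    + constructor; auto.
  - inversion H; subst. destruct (IHP1 _ _ _ H3) as [p1 [ns1 [A1 [B1 C1]]]].
    destruct (IHP2 _ _ _ H4) as [p2 [ns2 [A2 [B2 C2]]]].
    exists (RES p1 p2), (ns1 ++ ns2). split; [constructor; auto| split].
    + intros x Hx; apply in_app_or in Hx; destruct Hx; auto.
    + constructor; auto.
  - inversion H; subst.
    assert (G: exists ps ns, (forall x, In x ps -> approx x P) /\
              (forall x, In x ns -> approx x N) /\ lsub_list k ns ps ms).
    { clear H. induction ms as [|r ms IH].
      - exists [], []. split; [simpl; tauto| split; [simpl; tauto| constructor]].
      - destruct (IHP _ _ _ (H2 r (or_introl eq_refl))) as [p [ns [A [B C]]]].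
        destruct IH as [ps [ns2 [A2 [B2 C2]]]].
        + intros; apply H2; simpl; auto.
        + exists (p :: ps), (ns ++ ns2). split; [|split].
          * simpl; intros x [<-|Hx]; auto.
          * intros x Hx; apply in_app_or in Hx; destruct Hx; auto.
          * constructor; auto. }
    destruct G as [ps [ns [A [B C]]]].
    exists (RBag ps), ns. split; [constructor; auto| split; auto]. constructor; auto.
  - inversion H; subst. destruct (IHP _ _ _ H2) as [p [ns [A [B C]]]].
    exists (RDer p), ns. split; [constructor; auto| split; auto]. constructor; auto.
Qed.

Lemma approx_plug_inv : forall L P n, approx n (plug L P) ->
  exists l n0, n = rplug l n0 /\ approx n0 P /\ Forall2 approx l L.
Proof.
  induction L; intros P n H; simpl in H.
  - exists [], n. split; auto.
  - inversion H as [| | |m0 n1 M0 N0 Hm Hn| |]; subst.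
    destruct (IHL _ _ Hm) as [l [k [E [A B]]]].
    exists (n1 :: l), k. subst. split; auto.
Qed.

Lemma approx_plug : forall l L n0 P, Forall2 approx l L -> approx n0 P ->
  approx (rplug l n0) (plug L P).
Proof.
  intros l L n0 P H. induction H; simpl; intros; auto. constructor; auto.
Qed.

Lemma root_case : forall M N, root M N -> forall n, approx n N ->
  exists m, approx m M /\ rsstep m n.
Proof.
  intros M N H; destruct H; intros n Hn.
  - destruct (approx_plug_inv _ _ _ Hn) as [l [n0 [E [A B]]]]. subst.
    inversion A; subst.
    destruct (approx_unlift _ _ _ _ H3) as [n1 [Hn1 Hr]]. subst.
    exists (RApp (rplug l (RLam m)) n1). split.
    + constructor; auto. apply approx_plug; auto. constructor; auto.
    + apply rs_root. rewrite <- (Forall2_length B). apply rroot_beta.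
  - destruct (approx_plug_inv _ _ _ Hn) as [l [n0 [E [A B]]]]. subst.
    destruct (approx_subst _ _ _ _ A) as [p [ns [A1 [B1 C1]]]].
    destruct (approx_unlift _ _ _ _ A1) as [m [Hm Hr]]. subst.
    exists (RES m (rplug l (RBag ns))). split.
    + constructor; auto. apply approx_plug; auto. constructor; auto.
    + apply rs_root. apply rroot_subst with (ns' := ns); auto.
      rewrite (Forall2_length B); auto.
  - destruct (approx_plug_inv _ _ _ Hn) as [l [n0 [E [A B]]]]. subst.
    exists (RDer (rplug l (RBag [n0]))). split.
    + constructor. apply approx_plug; auto. constructor. simpl; intros x [<-|[]]; auto.
    + apply rs_root. apply rroot_der.
Qed.

Theorem mainTheorem4 :
  forall (M N : term), sstep M N ->
  forall n : rterm, approx n N ->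
  exists m : rterm, approx m M /\ rsstep m n.
Proof.
  intros M N H; induction H; intros n Hn.
  - eapply root_case; eauto.
  - inversion Hn as [|a A Ha| | | |]; subst. destruct (IHsstep _ Ha) as [k [A1 B]].
    exists (RLam k); split; [constructor; auto| apply rs_lam; auto].
  - inversion Hn as [| |a b A B0 Ha Hb| | |]; subst. destruct (IHsstep _ Ha) as [k [A1 B]].
    exists (RApp k b); split; [constructor; auto| apply rs_appl; auto].
  - inversion Hn as [| |a b A B0 Ha Hb| | |]; subst. destruct (IHsstep _ Hb) as [k [A1 B]].
    exists (RApp a k); split; [constructor; auto| apply rs_appr; auto].
  - inversion Hn as [| | |a b A B0 Ha Hb| |]; subst. destruct (IHsstep _ Ha) as [k [A1 B]].
    exists (RES k b); split; [constructor; auto| apply rs_esl; auto].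
  - inversion Hn as [| | |a b A B0 Ha Hb| |]; subst. destruct (IHsstep _ Hb) as [k [A1 B]].
    exists (RES a k); split; [constructor; auto| apply rs_esr; auto].
  - inversion Hn as [| | | |a A Ha|]; subst. destruct (IHsstep _ Ha) as [k [A1 B]].
    exists (RDer k); split; [constructor; auto| apply rs_der; auto].
Qed.
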